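(* For every integer $n\ge 0$, \[ \sum_{j=0}^{n} \frac{q^{2j}(q;q)_{n+j}}{(q^2;q^2)_j}=(q;q^2)_{n+1}+q^{n+1}(q^2;q^2)_n . \]
   Context: $(a;q)_0:=1$ and $(a;q)_n:=(1-a)(1-aq)\cdots(1-aq^{n-1})$ for $n\ge1$. *)

(* Defs.v *)
From mathcomp Require Import all_boot all_algebra.
Set Implicit Arguments. Unset Strict Implicit. Unset Printing Implicit Defensive.
Import GRing.Theory.
Local Open Scope ring_scope.

Definition qpoch {R : comRingType} (a q : R) (n : nat) : R :=
  \prod_(i < n) (1 - a * q ^+ i).

(* Main.v *)
Require Import Defs.
From mathcomp Require Import all_boot all_algebra.
From mathcomp Require Import ring.
Import GRing.Theory.
Local Open Scope ring_scope.

Lemma qpochS (R : comRingType) (a q : R) n : qpoch a q n.+1 = qpoch a q n * (1 - a * q ^+ n).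
Proof. by rewrite /qpoch big_ord_recr. Qed.

Lemma qpoch0 (R : comRingType) (a q : R) : qpoch a q 0 = 1.
Proof. by rewrite /qpoch big_ord0. Qed.

Lemma odd_even (F : fieldType) (q : F) N :
  qpoch q q (2 * N).+1 = qpoch q (q ^+ 2) N.+1 * qpoch (q ^+ 2) (q ^+ 2) N.
Proof.
elim: N => [|N IH]; first by rewrite !qpochS !qpoch0; ring.
have -> : (2 * N.+1).+1 = (2 * N).+1.+2 by rewrite mulnS.
rewrite (@qpochS _ q q (2*N).+2) (@qpochS _ q q (2*N).+1) IH.
rewrite (@qpochS _ q (q^+2) N.+1) (@qpochS _ (q^+2) (q^+2) N) -!exprM.
rewrite mulnS exprD (exprS q (2*N)). move: (q ^+ (2 * N)) => x. ring.
Qed.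

From mathcomp Require Import zify.

Lemma tele (F : fieldType) (q : F) n m
  (hP : forall j, (j <= m)%N -> qpoch (q^+2) (q^+2) j != 0) :
  \sum_(0 <= j < m.+1) (q^+(2 * j) - q^+n.+1 * q^+j) * (qpoch q q (n+j) / qpoch (q^+2) (q^+2) j)
  = qpoch q q (n+m).+1 / qpoch (q^+2) (q^+2) m.
Proof.
elim: m hP => [|m IH] hP.
  rewrite big_nat1 addn0 qpoch0 divr1 !expr0 qpochS exprS divr1 mulr1; ring.
rewrite (big_nat_recr _ _ _ (leq0n m.+1)) /= IH; last by move=> j hj; apply: hP; lia.
have h2 := hP m.+1 (leqnn _).
rewrite (@qpochS _ (q^+2) (q^+2) m) in h2 *.
rewrite mulf_eq0 negb_or in h2; case/andP: h2 => h1 h3.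
rewrite addnS (@qpochS _ q q (n+m).+1).
have e1 : q^+(2 * m.+1) = q^+2 * (q^+m)^+2 by rewrite -!exprM -!exprD; congr (_ ^+ _); lia.
have e2 : (q^+2)^+m = (q^+m)^+2 by rewrite -!exprM; congr (_ ^+ _); lia.
have e3 : q^+(n+m).+1 = q * q^+n * q^+m by rewrite -exprS -exprD; congr (_ ^+ _); lia.
have e4 : q^+n.+1 = q * q^+n by rewrite exprS.
rewrite e2 in h3.
rewrite e1 e2 e3 e4 (exprS q m).
move: (q^+m) (q^+n) h3 (qpoch q q (n+m).+1) (qpoch (q^+2) (q^+2) m) h1 => a b h3 c d h1.
field. by rewrite exprMn h1 h3.
Qed.

Lemma W1 (F : fieldType) (q : F) k
  (hP : forall j, (j <= k)%N -> qpoch (q^+2) (q^+2) j != 0) :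
  \sum_(0 <= j < k.+1) q^+j * (qpoch q q (k+j) / qpoch (q^+2) (q^+2) j)
  = qpoch (q^+2) (q^+2) k.
Proof.
elim: k hP => [|k IH] hP.
  by rewrite big_nat1 !qpoch0 expr0 divr1 mul1r.
have E : forall j, q^+j * (qpoch q q (k.+1+j) / qpoch (q^+2) (q^+2) j)
  = (1 - q^+(2 * k.+1)) * (q^+j * (qpoch q q (k+j) / qpoch (q^+2) (q^+2) j))
    - q^+k.+1 * ((q^+(2 * j) - q^+k.+1 * q^+j) * (qpoch q q (k+j) / qpoch (q^+2) (q^+2) j)).
  move=> j; rewrite addSn qpochS.
  have -> : q^+(2 * k.+1) = q^+k.+1 * q^+k.+1 by rewrite -exprD; congr (_ ^+ _); lia.
  have -> : q^+(2 * j) = q^+j * q^+j by rewrite -exprD; congr (_ ^+ _); lia.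
  have -> : q * q^+(k+j) = q^+k.+1 * q^+j by rewrite -exprS -exprD.
  rewrite /=; ring.
rewrite (eq_bigr _ (fun j _ => E j)) sumrB -!mulr_sumr tele; last exact: hP.
rewrite (big_nat_recr _ _ _ (leq0n k.+1)) /= IH; last by move=> j hj; apply: hP; lia.
have h2 := hP k.+1 (leqnn _).
rewrite (@qpochS _ (q^+2) (q^+2) k) in h2 *.
rewrite mulf_eq0 negb_or in h2; case/andP: h2 => h1 h3.
rewrite (@qpochS _ q q (k + k.+1)).
have e1 : q^+(2 * k.+1) = q^+2 * (q^+k)^+2 by rewrite -!exprM -!exprD; congr (_ ^+ _); lia.
have e2 : (q^+2)^+k = (q^+k)^+2 by rewrite -!exprM; congr (_ ^+ _); lia.
have e3 : q^+(k + k.+1) = q * (q^+k)^+2 by rewrite -exprM -exprS addnS; congr (_ ^+ _); lia.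
rewrite e2 in h3.
rewrite e1 e2 e3 (exprS q k).
move: (q^+k) h3 (qpoch q q (k + k.+1)) (qpoch (q^+2) (q^+2) k) h1 => a h3 c d h1.
field. by rewrite exprMn h1 h3.
Qed.

Theorem lemma3p4 (F : fieldType) (q : F) (n : nat)
  (hq : forall j : nat, (j <= n)%N -> qpoch (q ^+ 2) (q ^+ 2) j != 0) :
  \sum_(0 <= j < n.+1) q ^+ (2 * j) * qpoch q q (n + j) / qpoch (q ^+ 2) (q ^+ 2) j
  = qpoch q (q ^+ 2) n.+1 + q ^+ n.+1 * qpoch (q ^+ 2) (q ^+ 2) n.
Proof.
have E : forall j, q ^+ (2 * j) * qpoch q q (n + j) / qpoch (q ^+ 2) (q ^+ 2) j
  = (q^+(2 * j) - q^+n.+1 * q^+j) * (qpoch q q (n+j) / qpoch (q^+2) (q^+2) j)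
    + q^+n.+1 * (q^+j * (qpoch q q (n+j) / qpoch (q^+2) (q^+2) j)).
  move=> j; rewrite -mulrA; ring.
rewrite (eq_bigr _ (fun j _ => E j)) big_split /= -mulr_sumr tele // W1 //.
rewrite addnn -mul2n odd_even mulfK; last exact: hq.
by [].
Qed.
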